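(* Let $n$ and $x$ be integers with $4 \leq x \leq n-3$ and such that $(n-4)x$ is even. Let $d$ be the sequence of length $n$ $$d = (n-1,\, n-1,\, \underbrace{x, \ldots, x}_{n-4},\, 2,\, 2).$$ Then $d$ is a $2$-factorable graphic sequence, and no realization of $d$ has a connected $2$-factor.
   Context: A finite sequence of nonnegative integers $d = (d_1, \ldots, d_n)$ is graphic if there is a simple graph on vertices $v_1, \ldots, v_n$ with $\deg(v_i) = d_i$ for all $i$; such a graph is a realization of $d$. A $k$-factor of a graph $G$ is a spanning subgraph of $G$ in which every vertex has degree $k$. A graphic sequence $d$ is $k$-factorable if some realization of $d$ contains a $k$-factor. A connected $k$-factor is a $k$-factor that is a connected graph. *)

(* Defs.v *)
From mathcomp Require Import all_boot.
Unset Printing Implicit Defensive.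

Definition simple_graph (m : nat) (e : rel 'I_m) : Prop :=
  irreflexive e /\ symmetric e.

Definition deg (m : nat) (e : rel 'I_m) (i : 'I_m) : nat := #|[set j | e i j]|.

(* e is a realization of d: vertex v_i has degree d_i (0-indexed). *)
Definition realization (d : seq nat) (e : rel 'I_(size d)) : Prop :=
  simple_graph (size d) e /\ forall i : 'I_(size d), deg (size d) e i = nth 0 d i.

Definition graphic (d : seq nat) : Prop := exists e, realization d e.

Definition k_factor (m k : nat) (e f : rel 'I_m) : Prop :=
  simple_graph m f /\ subrel f e /\ forall i, deg m f i = k.

Definition k_factorable (k : nat) (d : seq nat) : Prop :=
  exists e, realization d e /\ exists f, k_factor (size d) k e f.

Definition connected_graph (m : nat) (f : rel 'I_m) : Prop :=
  forall i j, connect f i j.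

Definition connected_k_factor (m k : nat) (e f : rel 'I_m) : Prop :=
  k_factor m k e f /\ connected_graph m f.

Definition dseq (n x : nat) : seq nat :=
  [:: n.-1; n.-1] ++ nseq (n - 4) x ++ [:: 2; 2].

(* Main.v *)
Require Import Defs.
From mathcomp Require Import all_boot.
From mathcomp Require Import zify.

Lemma card_iota N (P : pred nat) : #|[set j : 'I_N | P j]| = count P (iota 0 N).
Proof.
rewrite -sum1_card (eq_bigl (fun j : 'I_N => P j)); last by move=> j; rewrite inE.
by rewrite -(big_mkord (fun j => P j) (fun _ => 1)) sum1_count /index_iota subn0.
Qed.

Lemma cnt_cat (P : pred nat) s l1 l2 :
  count P (iota s (l1 + l2)) = count P (iota s l1) + count P (iota (s + l1) l2).
Proof. by rewrite iotaD count_cat. Qed.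

Lemma cnt_true (P : pred nat) s l : (forall t, s <= t -> t < s + l -> P t) ->
  count P (iota s l) = l.
Proof.
move=> H; rewrite (eq_in_count (a2 := predT)) ?count_predT ?size_iota //.
by move=> t; rewrite mem_iota => /andP [H1 H2]; rewrite H.
Qed.

Lemma cnt_false (P : pred nat) s l : (forall t, s <= t -> t < s + l -> P t = false) ->
  count P (iota s l) = 0.
Proof.
move=> H; rewrite (eq_in_count (a2 := pred0)) ?count_pred0 //.
by move=> t; rewrite mem_iota => /andP [H1 H2]; rewrite H.
Qed.

Lemma cnt_shift (P : pred nat) s l :
  count P (iota s l) = count (fun t => P (s + t)) (iota 0 l).
Proof. by rewrite -{1}(addn0 s) iotaDl count_map. Qed.

Lemma cnt_itv (P : pred nat) s l a b :
  (forall t, s <= t -> t < s + l -> P t = (a <= t) && (t < b)) ->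
  s <= a -> a <= b -> b <= s + l -> count P (iota s l) = b - a.
Proof.
move=> H H1 H2 H3.
have -> : l = (a - s) + (b - a) + (s + l - b) by lia.
rewrite !cnt_cat.
have E1 : count P (iota s (a - s)) = 0.
  by apply: cnt_false => t T1 T2; rewrite H; lia.
have E2 : count P (iota (s + (a - s)) (b - a)) = b - a.
  by apply: cnt_true => t T1 T2; rewrite H; lia.
have E3 : count P (iota (s + (a - s + (b - a))) (s + l - b)) = 0.
  by apply: cnt_false => t T1 T2; rewrite H; lia.
rewrite E1 E2 E3; lia.
Qed.

Definition Dp m h (c:bool) t :=
  ((1 <= t) && (t <= h)) || ((m - h <= t) && (t < m)) || (c && (t + t == m)).

Lemma Dp_count m h (c : bool) : h + h + c < m -> (c -> exists p, m = p + p) ->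
  count (Dp m h c) (iota 0 m) = h + h + c.
Proof.
move=> Hm Hc.
rewrite {1}[in iota 0 m](_ : m = (h + 1) + (m - h - (h + 1)) + h); last by lia.
rewrite (cnt_cat _ 0 (h + 1 + _) h) (cnt_cat _ 0 (h + 1) _) !add0n.
have E1 : count (Dp m h c) (iota 0 (h + 1)) = h.
  rewrite (cnt_itv _ 0 (h + 1) 1 (h + 1)); try lia.
  move=> t T1 T2; rewrite /Dp; case: c Hm Hc; lia.
have E3 : count (Dp m h c) (iota (h + 1 + (m - h - (h + 1))) h) = h.
  apply: cnt_true => t T1 T2; rewrite /Dp; clear E1; case: c Hm Hc; lia.
rewrite E1 E3; clear E1 E3.
case: c Hm Hc => Hm Hc.
  have [p Hp] := Hc isT.
  rewrite (cnt_itv _ (h + 1) (m - h - (h + 1)) p (p + 1)); try lia.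
  move=> t T1 T2; rewrite /Dp; lia.
rewrite (cnt_false _ (h + 1)); try lia.
move=> t T1 T2; rewrite /Dp; lia.
Qed.

Definition dif m i j := if i <= j then j - i else j + m - i.

Lemma cnt_dif (P : pred nat) m i : i < m ->
  count (fun j => P (dif m i j)) (iota 0 m) = count P (iota 0 m).
Proof.
move=> Hi.
rewrite [in RHS](_ : m = i + (m - i)); last by lia.
rewrite [in LHS](_ : m = i + (m - i)); last by lia.
rewrite !cnt_cat add0n.
rewrite [X in _ + X = _]cnt_shift.
rewrite (@eq_in_count _ _ P (iota 0 (m - i))); last first.
  move=> t; rewrite mem_iota => /andP [T1 T2]; rewrite /dif ifT; last by lia.
  congr P; lia.
rewrite (@eq_in_count _ _ (fun j => P ((i + (m - i) - i) + j)) (iota 0 i)); last first.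
  move=> t; rewrite mem_iota => /andP [T1 T2]; rewrite /dif ifF; last by lia.
  congr P; lia.
rewrite -cnt_shift addnC -cnt_cat.
have -> : i + (m - i) - i = m - i by lia.
rewrite -[iota (m - i) i]/(iota (0 + (m - i)) i) -cnt_cat.
by rewrite (_ : m - i + i = i + (m - i)) //; lia.
Qed.

Lemma Dp_sym m h c i j : i < m -> j < m -> Dp m h c (dif m i j) = Dp m h c (dif m j i).
Proof. move=> Hi Hj; rewrite /Dp /dif; case: ifP; case: ifP; case: c; lia. Qed.

Definition Eg n h c i j := if (i < 2) || (j < 2) then i != j
  else (i < n - 2) && (j < n - 2) && Dp (n - 4) h c (dif (n - 4) (i - 2) (j - 2)).

Definition Fg n i j := if (i < 2) || (j < 2) then ((i < 2) && (n - 2 <= j)) || ((j < 2) && (n - 2 <= i))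
  else (i < n - 2) && (j < n - 2) && Dp (n - 4) 1 false (dif (n - 4) (i - 2) (j - 2)).

Lemma mid_count n h c i : 2 <= i -> i < n - 2 ->
  count (fun j => (i < n - 2) && (j < n - 2) && Dp (n - 4) h c (dif (n - 4) (i - 2) (j - 2)))
    (iota 2 (n - 4)) = count (Dp (n - 4) h c) (iota 0 (n - 4)).
Proof.
move=> H1 H2; rewrite cnt_shift -(@cnt_dif (Dp (n - 4) h c) _ (i - 2)); last by lia.
apply: eq_in_count => t; rewrite mem_iota => /andP [T1 T2].
rewrite H2 /= (_ : 2 + t < n - 2); last by lia.
by rewrite /= (_ : 2 + t - 2 = t) //; lia.
Qed.

Lemma split3 (P : pred nat) n : 4 <= n ->
  count P (iota 0 n) = count P (iota 0 2) + count P (iota 2 (n - 4)) + count P (iota (n - 2) 2).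
Proof.
move=> Hn; rewrite {1}(_ : n = 2 + (n - 4) + 2); last by lia.
rewrite (cnt_cat _ 0 (2 + _) 2) (cnt_cat _ 0 2 _) !add0n.
by rewrite (_ : 2 + (n - 4) = n - 2) //; lia.
Qed.

Lemma mid_count' (P : pred nat) n h c i : 2 <= i -> i < n - 2 ->
  (forall t, 2 <= t -> P t = (i < n - 2) && (t < n - 2) && Dp (n - 4) h c (dif (n - 4) (i - 2) (t - 2))) ->
  count P (iota 2 (n - 4)) = count (Dp (n - 4) h c) (iota 0 (n - 4)).
Proof.
move=> H1 H2 HP; rewrite -(@mid_count n h c i H1 H2).
by apply: eq_in_count => t; rewrite mem_iota => /andP [T1 T2]; rewrite HP.
Qed.

Lemma Eg_deg n h (c : bool) i : 7 <= n -> h + h + c < n - 4 -> (c -> exists p, n - 4 = p + p) -> i < n ->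
  count (Eg n h c i) (iota 0 n) = if i < 2 then n - 1 else if i < n - 2 then h + h + c + 2 else 2.
Proof.
move=> Hn Hh Hc Hi; rewrite split3; last by lia.
case: ifP => I1.
  have S1 : count (Eg n h c i) (iota 0 2) = 1.
    have : i = 0 \/ i = 1 by lia.
    by case=> ->; rewrite /= /Eg /=; lia.
  have S2 : count (Eg n h c i) (iota 2 (n - 4)) = n - 4.
    by apply: cnt_true => t T1 T2; rewrite /Eg I1 /=; lia.
  have S3 : count (Eg n h c i) (iota (n - 2) 2) = 2.
    by apply: cnt_true => t T1 T2; rewrite /Eg I1 /=; lia.
  rewrite S1 S2 S3; lia.
have S1 : count (Eg n h c i) (iota 0 2) = 2.
  by apply: cnt_true => t T1 T2; rewrite /Eg /=; case: ifP => ?; lia.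
case: ifP => I2.
  have S2 : count (Eg n h c i) (iota 2 (n - 4)) = h + h + c.
    rewrite (@mid_count' _ n h c i); [|lia|lia|].
      rewrite Dp_count //; lia.
    by move=> t T1; rewrite /Eg /=; case: ifP => ?; lia.
  have S3 : count (Eg n h c i) (iota (n - 2) 2) = 0.
    by apply: cnt_false => t T1 T2; rewrite /Eg /=; case: ifP => ?; lia.
  rewrite S1 S2 S3; lia.
have S2 : count (Eg n h c i) (iota 2 (n - 4)) = 0.
  by apply: cnt_false => t T1 T2; rewrite /Eg /=; case: ifP => ?; lia.
have S3 : count (Eg n h c i) (iota (n - 2) 2) = 0.
  by apply: cnt_false => t T1 T2; rewrite /Eg /=; case: ifP => ?; lia.
rewrite S1 S2 S3; lia.
Qed.

Lemma Fg_deg n i : 7 <= n -> i < n -> count (Fg n i) (iota 0 n) = 2.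
Proof.
move=> Hn Hi; rewrite split3; last by lia.
case: (ltnP i 2) => I1.
  have S1 : count (Fg n i) (iota 0 2) = 0.
    by apply: cnt_false => t T1 T2; rewrite /Fg /=; case: ifP => ?; lia.
  have S2 : count (Fg n i) (iota 2 (n - 4)) = 0.
    by apply: cnt_false => t T1 T2; rewrite /Fg /=; case: ifP => ?; lia.
  have S3 : count (Fg n i) (iota (n - 2) 2) = 2.
    by apply: cnt_true => t T1 T2; rewrite /Fg /=; case: ifP => ?; lia.
  rewrite S1 S2 S3; lia.
case: (ltnP i (n - 2)) => I2.
  have S1 : count (Fg n i) (iota 0 2) = 0.
    by apply: cnt_false => t T1 T2; rewrite /Fg /=; case: ifP => ?; lia.
  have S2 : count (Fg n i) (iota 2 (n - 4)) = 2.
    rewrite (@mid_count' _ n 1 false i); [|lia|lia|].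
      rewrite Dp_count //; lia.
    by move=> t T1; rewrite /Fg /=; case: ifP => ?; lia.
  have S3 : count (Fg n i) (iota (n - 2) 2) = 0.
    by apply: cnt_false => t T1 T2; rewrite /Fg /=; case: ifP => ?; lia.
  rewrite S1 S2 S3; lia.
have S1 : count (Fg n i) (iota 0 2) = 2.
  by apply: cnt_true => t T1 T2; rewrite /Fg /=; case: ifP => ?; lia.
have S2 : count (Fg n i) (iota 2 (n - 4)) = 0.
  by apply: cnt_false => t T1 T2; rewrite /Fg /=; case: ifP => ?; lia.
have S3 : count (Fg n i) (iota (n - 2) 2) = 0.
  by apply: cnt_false => t T1 T2; rewrite /Fg /=; case: ifP => ?; lia.
rewrite S1 S2 S3; lia.
Qed.


Lemma size_dseq n x : 4 <= n -> size (dseq n x) = n.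
Proof. move=> Hn; rewrite /dseq size_cat /= size_cat size_nseq /=; lia. Qed.

Lemma nth_dseq n x i : 4 <= n -> i < n ->
  nth 0 (dseq n x) i = if i < 2 then n.-1 else if i < n - 2 then x else 2.
Proof.
move=> Hn Hi; rewrite /dseq nth_cat /=.
case: ifP => I1.
  have : i = 0 \/ i = 1 by lia.
  by case=> ->.
rewrite nth_cat size_nseq nth_nseq.
case: ifP => I2; first by rewrite I2 ifT //; lia.
rewrite ifF; last by lia.
have : i - 2 - (n - 4) = 0 \/ i - 2 - (n - 4) = 1 by lia.
by case=> ->.
Qed.

Lemma Dp0 m h c : h < m -> Dp m h c 0 = false.
Proof. rewrite /Dp; case: c; lia. Qed.

Lemma Eg_irr n h c i : h < n - 4 -> Eg n h c i i = false.
Proof.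
move=> Hh; rewrite /Eg; case: ifP => _; first by rewrite eqxx.
by rewrite /dif leqnn subnn Dp0 // andbF.
Qed.

Lemma Fg_irr n i : 2 < n - 4 -> Fg n i i = false.
Proof.
move=> Hh; rewrite /Fg; case: ifP => ?; first lia.
rewrite /dif leqnn subnn Dp0 ?andbF //; lia.
Qed.

Lemma Eg_sym n h c i j : i < n -> j < n -> Eg n h c i j = Eg n h c j i.
Proof.
move=> Hi Hj; rewrite /Eg orbC eq_sym; case: ifP => // H.
case: (ltnP i (n - 2)) => I; case: (ltnP j (n - 2)) => J; rewrite /= ?andbF //.
by rewrite Dp_sym //; lia.
Qed.

Lemma Fg_sym n i j : i < n -> j < n -> Fg n i j = Fg n j i.
Proof.
move=> Hi Hj; rewrite /Fg orbC orbC; case: ifP => H.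
  by rewrite orbC.
case: (ltnP i (n - 2)) => I; case: (ltnP j (n - 2)) => J; rewrite /= ?andbF //.
by rewrite Dp_sym //; lia.
Qed.

Lemma Fg_sub n h c i j : 4 <= n -> 1 <= h -> Fg n i j -> Eg n h c i j.
Proof.
move=> Hn Hh; rewrite /Fg /Eg; case: ifP => H.
  lia.
rewrite /Dp; case: c; lia.
Qed.

Lemma full_nbr N (e : rel 'I_N) a : irreflexive e -> #|[set j | e a j]| = N.-1 ->
  forall j, j != a -> e a j.
Proof.
move=> Hirr Hc j Hj.
have Hs : [set j | e a j] \subset [set~ a].
  by apply/subsetP => k; rewrite !inE; apply: contraTneq => ->; rewrite Hirr.
have : [set j | e a j] == [set~ a].
  by rewrite eqEcard Hs cardsC1 card_ord Hc leqnn.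
move/eqP => E.
have : j \in [set~ a] by rewrite !inE.
by rewrite -E inE.
Qed.

Lemma two_nbr N (e : rel 'I_N) s p q : p != q -> e s p -> e s q -> #|[set j | e s j]| = 2 ->
  forall j, e s j -> (j == p) || (j == q).
Proof.
move=> Hpq Hp Hq Hc j Hj.
have Hs : [set p; q] \subset [set j | e s j].
  by apply/subsetP => k; rewrite !inE => /orP [] /eqP ->.
have : [set p; q] == [set j | e s j] by rewrite eqEcard Hs cards2 Hpq Hc leqnn.
move/eqP => E.
have : j \in [set j | e s j] by rewrite inE.
by rewrite -E !inE.
Qed.

Lemma two_nbr' N (e : rel 'I_N) s p q : p != q -> (forall j, e s j -> (j == p) || (j == q)) ->
  #|[set j | e s j]| = 2 -> e s p /\ e s q.
Proof.
move=> Hpq H Hc.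
have Hs : [set j | e s j] \subset [set p; q].
  by apply/subsetP => k; rewrite !inE => /H.
have : [set j | e s j] == [set p; q] by rewrite eqEcard Hs cards2 Hpq Hc leqnn.
move/eqP => E; split.
  have : p \in [set p; q] by rewrite !inE eqxx.
  by rewrite -E inE.
have : q \in [set p; q] by rewrite !inE eqxx orbT.
by rewrite -E inE.
Qed.

Theorem mainTheorem1 (n x : nat) :
  4 <= x -> x <= n - 3 -> ~~ odd ((n - 4) * x) ->
  graphic (dseq n x) /\ k_factorable 2 (dseq n x) /\
  (forall e : rel 'I_(size (dseq n x)), realization (dseq n x) e ->
     ~ exists f, connected_k_factor (size (dseq n x)) 2 e f).
Proof.
move=> Hx1 Hx2 Hodd.
have Hn : 7 <= n by lia.
have HN : size (dseq n x) = n by apply: size_dseq; lia.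
have Kf : k_factorable 2 (dseq n x).
  set h := (x - 2)./2. set c := odd (x - 2).
  have Hk : h + h + c = x - 2.
    by rewrite /h /c addnn -{3}(odd_double_half (x - 2)); lia.
  have Hc : c -> exists p, n - 4 = p + p.
    move=> Hc; exists (n - 4)./2.
    have Hox : odd x by move: Hc; rewrite /c oddB; [rewrite /= addbF | lia].
    move: Hodd; rewrite oddM Hox andbT => /negbTE Ho.
    by rewrite addnn -{1}(odd_double_half (n - 4)) Ho.
  exists (fun i j : 'I_(size (dseq n x)) => Eg n h c i j); split.
    split; first split.
    - by move=> i; apply: Eg_irr; lia.
    - by move=> i j; apply: Eg_sym; [have := ltn_ord i | have := ltn_ord j]; lia.
    move=> i; have Hi := ltn_ord i.
    rewrite /deg card_iota [X in iota 0 X]HN Eg_deg //; try lia.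
    rewrite nth_dseq; [|lia|lia].
    case: ifP => _; first lia.
    case: ifP => _; lia.
  exists (fun i j : 'I_(size (dseq n x)) => Fg n i j); split; first split.
  - by move=> i; apply: Fg_irr; lia.
  - by move=> i j; apply: Fg_sym; [have := ltn_ord i | have := ltn_ord j]; lia.
  split.
    by move=> i j; apply: Fg_sub; lia.
  by move=> i; have Hi := ltn_ord i; rewrite /deg card_iota [X in iota 0 X]HN Fg_deg //; lia.
split.
  by case: Kf => e [He _]; exists e.
split=> //.
move=> e [[irr_e sym_e] deg_e] [f [[[irr_f sym_f] [sub_f deg_f]] conn]].
have Dg : forall i : 'I_(size (dseq n x)),
    #|[set j | e i j]| = if i < 2 then n.-1 else if i < n - 2 then x else 2.
  move=> i; have Hi := ltn_ord i.
  rewrite -[LHS]/(deg _ e i) deg_e nth_dseq //; lia.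
have H0 : 0 < size (dseq n x) by lia.
have H1 : 1 < size (dseq n x) by lia.
have Hu : n - 2 < size (dseq n x) by lia.
have Hv : n - 1 < size (dseq n x) by lia.
have Hw : 2 < size (dseq n x) by lia.
pose a := Ordinal H0; pose b := Ordinal H1; pose u := Ordinal Hu; pose v := Ordinal Hv.
pose w := Ordinal Hw.
have nab : a != b by apply/eqP => /(congr1 val) /=; lia.
have nua : u != a by apply/eqP => /(congr1 val) /=; lia.
have nub : u != b by apply/eqP => /(congr1 val) /=; lia.
have nva : v != a by apply/eqP => /(congr1 val) /=; lia.
have nvb : v != b by apply/eqP => /(congr1 val) /=; lia.
have nuv : u != v by apply/eqP => /(congr1 val) /=; lia.
have ea : forall j, j != a -> e a j.
  apply: full_nbr => //; rewrite Dg (_ : a < 2) //; lia.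
have eb : forall j, j != b -> e b j.
  apply: full_nbr => //; rewrite Dg (_ : b < 2) //; lia.
have Du : #|[set j | e u j]| = 2 by rewrite Dg /= ifF ?ifF //; lia.
have Dv : #|[set j | e v j]| = 2 by rewrite Dg /= ifF ?ifF //; lia.
have eu : forall j, e u j -> (j == a) || (j == b).
  by apply: two_nbr => //; rewrite sym_e; [apply: ea | apply: eb].
have ev : forall j, e v j -> (j == a) || (j == b).
  by apply: two_nbr => //; rewrite sym_e; [apply: ea | apply: eb].
have [fua fub] : f u a /\ f u b.
  apply: two_nbr' => //; [by move=> j /sub_f /eu | exact: deg_f].
have [fva fvb] : f v a /\ f v b.
  apply: two_nbr' => //; [by move=> j /sub_f /ev | exact: deg_f].
have fa : forall j, f a j -> (j == u) || (j == v).
  by apply: two_nbr => //; [rewrite sym_f | rewrite sym_f | exact: deg_f].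
have fb : forall j, f b j -> (j == u) || (j == v).
  by apply: two_nbr => //; [rewrite sym_f | rewrite sym_f | exact: deg_f].
pose S := [pred j | (j == a) || (j == b) || (j == u) || (j == v)].
have step : forall y z, f y z -> y \in S -> z \in S.
  move=> y z H; rewrite inE /= => /orP [/orP [/orP [/eqP Ey|/eqP Ey]|/eqP Ey]|/eqP Ey]; subst y.
  - by case/orP: (fa z H) => /eqP ->; rewrite inE /= ?eqxx ?orbT.
  - by case/orP: (fb z H) => /eqP ->; rewrite inE /= ?eqxx ?orbT.
  - by case/orP: (eu z (sub_f _ _ H)) => /eqP ->; rewrite inE /= ?eqxx ?orbT.
  - by case/orP: (ev z (sub_f _ _ H)) => /eqP ->; rewrite inE /= ?eqxx ?orbT.
have cl : closed f S.
  move=> y z H; apply/idP/idP; first exact: step H.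
  by apply: step; rewrite sym_f.
have := closed_connect cl (conn u w).
have -> : u \in S by rewrite inE /= eqxx !orbT.
rewrite inE /= -!val_eqE /=; lia.
Qed.
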